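(* Every infinite sequence $(w_n)_{n\in\mathbb N}$ of words over a finite alphabet $A$ admits a subsequence that is $(\vec u,\vec B)$-adequate for some factorization pattern $(\vec u,\vec B)$.
   Context: For $B\subseteq A$, $B^{\circledast}$ is the set of words over $B$ in which every symbol of $B$ occurs. A factorization pattern is $(\vec u,\vec B)$ with $\vec u=(u_0,\dots,u_p)\in(A^* )^{p+1}$, $\vec B=(B_1,\dots,B_p)$ nonempty subsets of $A$, $p\ge0$. $L(\vec u,\vec B,n)=u_0(B_1^{\circledast})^nu_1\cdots(B_p^{\circledast})^nu_p$. A sequence $(w_n)_n$ is $(\vec u,\vec B)$-adequate if $w_n\in L(\vec u,\vec B,n)$ for every $n$. *)

(* Defs.v *)
From mathcomp Require Import all_boot.
Set Implicit Arguments. Unset Strict Implicit. Unset Printing Implicit Defensive.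

Section Words.
Variable A : finType.

Definition fullword (B : {set A}) (w : seq A) : bool :=
  all (fun a => a \in B) w && [forall b in B, b \in w].

Definition in_pow (P : seq A -> bool) (n : nat) (w : seq A) : Prop :=
  exists ws : seq (seq A), size ws = n /\ all P ws /\ w = flatten ws.

(* v_1 (B_1^⊛)^n ... : words of  (B_1^⊛)^n u_1 (B_2^⊛)^n u_2 ... (B_p^⊛)^n u_p *)
Fixpoint in_tail (n : nat) (Bs : seq {set A}) (us : seq (seq A)) (w : seq A)
  : Prop :=
  match Bs, us with
  | [::], [::] => w = [::]
  | B :: Bs', u :: us' =>
      exists x y, w = x ++ u ++ y /\ in_pow (fullword B) n x /\ in_tail n Bs' us' y
  | _, _ => False
  end.

Definition fact_pattern (u : seq (seq A)) (Bs : seq {set A}) : Prop :=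
  size u = (size Bs).+1 /\ all (fun B => B != set0) Bs.

(* L(u,B,n) = u_0 (B_1^⊛)^n u_1 ... (B_p^⊛)^n u_p *)
Definition inL (u : seq (seq A)) (Bs : seq {set A}) (n : nat) (w : seq A) : Prop :=
  match u with
  | [::] => False
  | u0 :: us => exists y, w = u0 ++ y /\ in_tail n Bs us y
  end.

Definition adequate (u : seq (seq A)) (Bs : seq {set A}) (w : nat -> seq A) : Prop :=
  forall n, inL u Bs n (w n).
End Words.

(* Main.v *)
From Stdlib Require Import ClassicalEpsilon Classical.
Require Import Defs.
From mathcomp Require Import all_boot.
From mathcomp Require Import zify.
Set Implicit Arguments. Unset Strict Implicit. Unset Printing Implicit Defensive.

Definition incr (f : nat -> nat) := forall n, f n < f n.+1.

Lemma incr_mono f : incr f -> forall i j, i <= j -> f i <= f j.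
Proof.
move=> H i j /subnK <-; elim: (j - i) => [|k IH]; first by rewrite add0n.
by rewrite addSn (leq_trans IH) // ltnW.
Qed.

Lemma incr_ge f : incr f -> forall n, n <= f n.
Proof. by move=> H; elim=> [|n IH] //; apply: leq_ltn_trans IH (H n). Qed.

Lemma incr_comp f g : incr f -> incr g -> incr (fun n => f (g n)).
Proof.
move=> Hf Hg n; apply: (leq_trans (Hf (g n))); exact: incr_mono (Hg n).
Qed.

Definition Hered (A : finType) (w : nat -> seq A) :=
  forall psi, incr psi -> exists u Bs, fact_pattern u Bs /\ adequate u Bs (fun n => w (psi n)).

Lemma Hered_comp (A : finType) (w : nat -> seq A) phi : Hered w -> incr phi -> Hered (fun n => w (phi n)).
Proof. move=> H Hp psi Hpsi; exact: (H _ (incr_comp Hp Hpsi)). Qed.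

Fixpoint iterk (f : nat -> nat -> nat) k := if k is k'.+1 then f k' (iterk f k') else 0.

Lemma select (P : nat -> nat -> nat -> Prop) :
  (forall k m, exists n, m < n /\ P k m n) ->
  exists rho, incr rho /\ forall k, P k (rho k) (rho k.+1).
Proof.
move=> H.
pose f k m := proj1_sig (constructive_indefinite_description _ (H k m)).
have Hf k m : m < f k m /\ P k m (f k m).
  by rewrite /f; case: (constructive_indefinite_description _ _).
by exists (iterk f); split => k /=; apply (Hf k (iterk f k)).
Qed.

Lemma io_sub (P : nat -> Prop) :
  (forall N, exists n, N <= n /\ P n) -> exists phi, incr phi /\ forall k, P (phi k).
Proof.
move=> H; have [rho [Hr HP]] := select (P := fun _ _ n => P n) (fun k m => H m.+1).
by exists (fun k => rho k.+1); split => k; [exact: Hr | exact: HP].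
Qed.

Lemma pigeon (T : finType) (f : nat -> T) : exists phi c, incr phi /\ forall k, f (phi k) = c.
Proof.
have [c Hc]: exists c, forall N, exists n, N <= n /\ f n = c.
  apply: NNPP => Hn.
  have Hb c : exists N, forall n, N <= n -> f n <> c.
    apply: NNPP => Hc; apply: Hn; exists c => N.
    apply: NNPP => HN; apply: Hc; exists N => n Hn' Hfn; apply: HN; by exists n.
  pose g c := proj1_sig (constructive_indefinite_description _ (Hb c)).
  have Hg c : forall n, g c <= n -> f n <> c.
    by rewrite /g; case: (constructive_indefinite_description _ _).
  apply: (Hg (f (\max_c g c)) (\max_c g c)) => //; exact: leq_bigmax.
have [phi [Hp Hc']] := io_sub Hc.
by exists phi, c.
Qed.

Notation inD D w := (all (fun a => a \in D) w).

Definition hasblocks (A : finType) (D : {set A}) K (w : seq A) :=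
  exists bs r, size bs = K /\ all (fullword D) bs /\ w = flatten bs ++ r.

Lemma full_ext (A : finType) (D : {set A}) (x b y : seq A) :
  fullword D b -> inD D x -> inD D y -> fullword D (x ++ b ++ y).
Proof.
case/andP => Hb /forall_inP Hc Hx Hy; apply/andP; split.
  by move: Hx Hy; rewrite !all_cat Hb => -> ->.
by apply/forall_inP => z /Hc Hz; rewrite !mem_cat Hz orbT.
Qed.

Lemma inD_flatten (A : finType) (D : {set A}) bs :
  all (fullword D) bs -> inD D (flatten bs).
Proof.
elim: bs => [|b bs IH] //= /andP[/andP[Hb _] Hbs].
by rewrite all_cat Hb /=; exact: IH.
Qed.

Lemma pow_blocks (A : finType) (D : {set A}) n (p r : seq A) bs :
  0 < n -> n <= size bs -> all (fullword D) bs -> inD D p -> inD D r ->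
  in_pow (fullword D) n (p ++ flatten bs ++ r).
Proof.
elim: n p bs => [//|[|m] IH] p [|b bs] //= _ Hs /andP[Hb Hbs] Hp Hr.
  exists [:: p ++ (b ++ flatten bs) ++ r]; split => //; split; last by rewrite /= cats0.
  rewrite /= andbT -catA; apply: full_ext => //.
  by rewrite all_cat inD_flatten.
have [ws [Hsz [Hall Heq]]] := IH [::] bs erefl Hs Hbs erefl Hr.
exists ((p ++ b) :: ws); split; first by rewrite /= Hsz.
split; first by rewrite /= Hall andbT -[p ++ b]cats0 -catA; apply: full_ext.
by rewrite /= -Heq /= !catA.
Qed.

Lemma split_mem (T : eqType) (x : T) s : x \in s -> exists p q, s = p ++ x :: q.
Proof. by case/splitPr => p q; exists p, q. Qed.

Lemma big_tail (A : finType) (D : {set A}) n (v p r : seq A) bs :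
  0 < n -> inD D v -> inD D p -> inD D r -> all (fullword D) bs ->
  (size v).+1 * n.+1 <= size bs ->
  in_tail n (nseq (size v).+1 D) (map (fun c => [:: c]) v ++ [:: [::]]) (p ++ flatten bs ++ r).
Proof.
move=> n0; elim: v p bs => [|c v IH] p bs Hv Hp Hr Hbs Hs /=.
  exists (p ++ flatten bs ++ r), [::]; split; first by rewrite cats0.
  split => //; apply: pow_blocks => //.
  by rewrite mul1n in Hs; apply: ltnW.
case/andP: Hv => Hc Hv.
have Hn : n < size bs by move: Hs; rewrite mulSn; lia.
have Hd : drop n bs = nth [::] bs n :: drop n.+1 bs by rewrite (drop_nth [::]).
have := Hbs; rewrite -{1}(cat_take_drop n bs) all_cat Hd => /andP[Ht /andP[Hb Hdr]].
have [p1 [q1 Eb]] : exists p1 q1, nth [::] bs n = p1 ++ c :: q1.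
  apply: split_mem; case/andP: Hb => _ /forall_inP; exact.
have Hfl : flatten bs = flatten (take n bs) ++ nth [::] bs n ++ flatten (drop n.+1 bs).
  by rewrite -{1}(cat_take_drop n bs) Hd flatten_cat.
case/andP: Hb; rewrite Eb all_cat /= => /andP[Hp1 /andP[_ Hq1]] _.
exists (p ++ flatten (take n bs) ++ p1), (q1 ++ flatten (drop n.+1 bs) ++ r); split.
  by rewrite Hfl Eb -!catA.
split.
  apply: pow_blocks => //; by rewrite size_takel // ltnW.
apply: IH => //; rewrite size_drop; move: Hs; rewrite !mulSn; set X := _ * _; lia.
Qed.

Lemma tail0 (A : finType) (D : {set A}) (v : seq A) :
  in_tail 0 (nseq (size v).+1 D) (map (fun c => [:: c]) v ++ [:: [::]]) v.
Proof.
elim: v => [|c v IH] /=.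
  by exists [::], [::]; split => //; split => //; exists [::].
by exists [::], v; split => //; split => //; exists [::].
Qed.

Lemma big_hered (A : finType) (D : {set A}) (u : nat -> seq A) :
  D != set0 -> (forall n, inD D (u n)) ->
  (forall i j, i < j -> hasblocks D ((size (u i)).+1 * j.+1) (u j)) -> Hered u.
Proof.
move=> D0 HD HG psi Hpsi.
set v := u (psi 0).
exists ([::] :: (map (fun c => [:: c]) v ++ [:: [::]])), (nseq (size v).+1 D); split.
  split; first by rewrite /= size_cat size_map size_nseq /= addn1.
  by rewrite all_nseq D0 orbT.
move=> [|n] /=.
  by exists v; split => //; exact: tail0.
have Hlt : psi 0 < psi n.+1 by apply: leq_trans (Hpsi 0) _; apply: incr_mono.
have [bs [r [Hsz [Hbs Heq]]]] := HG _ _ Hlt.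
exists (u (psi n.+1)); split => //.
have := HD (psi n.+1); rewrite Heq all_cat => /andP[_ Hr].
rewrite -[flatten bs ++ r]cat0s; apply: big_tail => //.
  exact: HD.
rewrite Hsz leq_mul2l ltnS; apply/orP; right; exact: (incr_ge Hpsi).
Qed.

Fixpoint glue (A : finType) (u0 : seq A) (us : seq (seq A)) (v u0' : seq A)
  (us' : seq (seq A)) : seq (seq A) :=
  if us is u1 :: us2 then u0 :: glue u1 us2 v u0' us' else (u0 ++ v ++ u0') :: us'.

Lemma size_glue (A : finType) (u0 : seq A) us v u0' us' :
  size (glue u0 us v u0' us') = size us + (size us').+1.
Proof. by elim: us u0 => [|u1 us IH] u0 //=; rewrite IH. Qed.

Lemma glue_ok (A : finType) n (v : seq A) u0' us' B' x' :
  (exists y', x' = u0' ++ y' /\ in_tail n B' us' y') ->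
  forall us B u0 x, (exists y, x = u0 ++ y /\ in_tail n B us y) ->
  inL (glue u0 us v u0' us') (B ++ B') n (x ++ v ++ x').
Proof.
move=> [y' [-> Hy']]; elim=> [|u1 us2 IH] [|B1 B2] u0 x [y [-> Hy]] //=.
  by rewrite Hy; exists y'; split => //; rewrite cats0 !catA.
case: Hy => x1 [y1 [-> [Hx1 Hy1]]].
have := IH B2 u1 (u1 ++ y1) (ex_intro _ y1 (conj erefl Hy1)).
case E: (glue u1 us2 v u0' us') => [|g0 gs] //= [Y [HY HYt]].
exists (x1 ++ g0 ++ Y); split; last by exists x1, Y.
by rewrite -catA -HY !catA.
Qed.

Lemma concat_hered (A : finType) (s t w : nat -> seq A) (a : A) :
  Hered s -> Hered t -> (forall n, w n = s n ++ a :: t n) -> Hered w.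
Proof.
move=> Hs Ht Hw psi Hpsi.
have [[|u0 us] [B [[Hsz HB] Had]]] := Hs psi Hpsi; first by case: Hsz.
have [[|u0' us'] [B' [[Hsz' HB'] Had']]] := Ht psi Hpsi; first by case: Hsz'.
exists (glue u0 us [:: a] u0' us'), (B ++ B'); split.
  split; last by rewrite all_cat HB HB'.
  move: Hsz Hsz'; rewrite size_glue size_cat /= => [[->]] [->]; lia.
move=> n; rewrite Hw.
exact: (@glue_ok A n [:: a] _ _ _ _ (Had' n) _ _ _ _ (Had n)).
Qed.

Lemma split_first (A : finType) (D : {set A}) (w : seq A) :
  [forall b in D, b \in w] -> ~~ [forall b in D, b \in [::]] ->
  exists y a z, w = y ++ a :: z /\ ~~ [forall b in D, b \in y] /\
    [forall b in D, b \in rcons y a].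
Proof.
elim/last_ind: w => [|w c IH] Hc H0; first by rewrite Hc in H0.
case Hw: [forall b in D, b \in w].
  have [y [a [z [-> [H1 H2]]]]] := IH Hw H0.
  by exists y, a, (rcons z c); split => //; rewrite rcons_cat.
by exists w, c, [::]; split; [rewrite cats1 | rewrite Hw].
Qed.

Lemma choice3 (X Y Z : Type) (P : nat -> X -> Y -> Z -> Prop) :
  (forall k, exists x y z, P k x y z) -> exists fx fy fz, forall k, P k (fx k) (fy k) (fz k).
Proof.
move=> H.
pose g k := constructive_indefinite_description _ (H k).
pose h k := constructive_indefinite_description _ (proj2_sig (g k)).
pose l k := constructive_indefinite_description _ (proj2_sig (h k)).
exists (fun k => proj1_sig (g k)), (fun k => proj1_sig (h k)), (fun k => proj1_sig (l k)).
move=> k; exact: (proj2_sig (l k)).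
Qed.

Lemma empty_hered (A : finType) (w : nat -> seq A) : (forall n, w n = [::]) -> Hered w.
Proof.
move=> Hw psi _; exists [:: [::]], [::]; split; first by split.
by move=> n; rewrite Hw; exists [::].
Qed.

Lemma hasblocks_le (A : finType) (D : {set A}) K K' (w : seq A) :
  K' <= K -> hasblocks D K w -> hasblocks D K' w.
Proof.
move=> HK [bs [r [Hsz [Hbs ->]]]].
exists (take K' bs), (flatten (drop K' bs) ++ r); split; first by rewrite size_takel // Hsz.
move: Hbs; rewrite -{1}(cat_take_drop K' bs) all_cat => /andP[Ht _]; split => //.
by rewrite -{1}(cat_take_drop K' bs) flatten_cat catA.
Qed.

Definition claim (A : finType) (D : {set A}) := forall w : nat -> seq A,
  (forall n, inD D (w n)) -> exists phi, incr phi /\ Hered (fun n => w (phi n)).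

Lemma inner (A : finType) (D : {set A})
  (IH : forall D' : {set A}, #|D'| < #|D| -> claim D') (D0 : D != set0) :
  forall K (w : nat -> seq A), (forall n, inD D (w n)) ->
  (forall n, ~ hasblocks D K (w n)) ->
  exists phi, incr phi /\ Hered (fun n => w (phi n)).
Proof.
have H0 : ~~ [forall b in D, b \in ([::] : seq A)].
  case/set0Pn: D0 => x Hx; apply/negP => /forall_inP /(_ x Hx); by rewrite in_nil.
elim=> [|K IHK] w HD HK.
  by case: (HK 0); exists [::], (w 0).
pose f n := [pick b in D | b \notin w n].
have [phi [c [Hphi Hc]]] := pigeon f.
case: c Hc => [b|] Hc.
  have Hk k : (b \in D) && (b \notin w (phi k)).
    by move: (Hc k); rewrite /f; case: pickP => [x Hx [<-]|_].
  have HbD : b \in D by case/andP: (Hk 0).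
  have Hcard : #|D :\ b| < #|D| by rewrite (cardsD1 b D) HbD.
  have HDk k : inD (D :\ b) (w (phi k)).
    apply/allP => x Hx; rewrite in_setD1 (allP (HD (phi k)) x Hx) andbT.
    by apply/eqP => Exb; case/andP: (Hk k) => _; rewrite -Exb Hx.
  have [phi2 [Hphi2 HH]] := IH _ Hcard (fun k => w (phi k)) HDk.
  exists (fun n => phi (phi2 n)); split; first exact: incr_comp.
  exact: HH.
have Hcov k : [forall b in D, b \in w (phi k)].
  move: (Hc k); rewrite /f; case: pickP => [//|Hn _].
  by apply/forall_inP => x Hx; move: (Hn x); rewrite Hx /=; case: (x \in _).
have [ys [as_ [zs Hs]]] := choice3 (fun k => split_first (Hcov k) H0).
pose g k := ([pick b in D | b \notin ys k], as_ k).
have [phi2 [[c a] [Hphi2 Hg]]] := pigeon g.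
have Hw k : w (phi (phi2 k)) = ys (phi2 k) ++ a :: zs (phi2 k).
  by have [-> _] := Hs (phi2 k); case: (Hg k) => _ ->.
case: c Hg => [b|] Hg; last first.
  have [_ [Hny _]] := Hs (phi2 0).
  move: (Hg 0); rewrite /g; case: pickP => [//|Hn _].
  case/negP: Hny; apply/forall_inP => x Hx; move: (Hn x); rewrite Hx /=; by case: (x \in _).
have Hk k : (b \in D) && (b \notin ys (phi2 k)).
  by move: (Hg k); rewrite /g; case: pickP => [x Hx [<-]|_].
have HbD : b \in D by case/andP: (Hk 0).
have Hcard : #|D :\ b| < #|D| by rewrite (cardsD1 b D) HbD.
have HDw k : inD D (ys (phi2 k)) && inD D (zs (phi2 k)).
  by move: (HD (phi (phi2 k))); rewrite Hw all_cat /= => /and3P[-> _ ->].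
have Ha : a \in D.
  by move: (HD (phi (phi2 0))); rewrite Hw all_cat /= => /and3P[_ -> _].
have HDy k : inD (D :\ b) (ys (phi2 k)).
  apply/allP => x Hx; rewrite in_setD1.
  case/andP: (HDw k) => /allP /(_ x Hx) -> _; rewrite andbT.
  by apply/eqP => Exb; case/andP: (Hk k) => _; rewrite -Exb Hx.
have [phi3 [Hphi3 HH3]] := IH _ Hcard (fun k => ys (phi2 k)) HDy.
have HDz k : inD D (zs (phi2 (phi3 k))) by case/andP: (HDw (phi3 k)).
have HKz k : ~ hasblocks D K (zs (phi2 (phi3 k))).
  move=> [bs [r [Hsz [Hbs Heq]]]]; apply: (HK (phi (phi2 (phi3 k)))).
  exists (rcons (ys (phi2 (phi3 k))) a :: bs), r; split; first by rewrite /= Hsz.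
  split.
    rewrite /= Hbs andbT; apply/andP; split.
      by rewrite all_rcons Ha /=; case/andP: (HDw (phi3 k)) => -> _.
    by have [_ [_ ]] := Hs (phi2 (phi3 k)); case: (Hg (phi3 k)) => _ ->.
  by rewrite Hw Heq /= cat_rcons -catA.
have [phi4 [Hphi4 HH4]] := IHK (fun k => zs (phi2 (phi3 k))) HDz HKz.
exists (fun n => phi (phi2 (phi3 (phi4 n)))); split.
  by apply: incr_comp => //; apply: incr_comp => //; exact: incr_comp.
apply: (@concat_hered A (fun n => ys (phi2 (phi3 (phi4 n)))) _ _ a).
- exact: (Hered_comp HH3 Hphi4).
- exact: HH4.
- by move=> n; rewrite Hw.
Qed.

Lemma step (A : finType) (D : {set A}) :
  (forall D' : {set A}, #|D'| < #|D| -> claim D') -> claim D.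
Proof.
move=> IH w HD.
case: (eqVneq D set0) => [D0|D0].
  exists (fun n => n); split => //; apply: empty_hered => n.
  by move: (HD n); rewrite D0; case: (w n) => [|x s] //=; rewrite in_set0.
case: (classic (exists K N, forall n, N <= n -> ~ hasblocks D K (w n))) => [[K [N HKN]]|Hn].
  have [phi [Hphi HH]] := @inner A D IH D0 K (fun n => w (n + N)) (fun n => HD _)
    (fun n => HKN _ (leq_addl _ _)).
  exists (fun n => phi n + N); split; last exact: HH.
  by move=> n; rewrite ltn_add2r; exact: Hphi.
have Hu K N : exists n, N <= n /\ hasblocks D K (w n).
  apply: NNPP => H1; apply: Hn; exists K, N => n HNn Hb; apply: H1; by exists n.
have Hbd k m : exists n, m < n /\
    forall i, i <= m -> hasblocks D ((size (w i)).+1 * k.+2) (w n).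
  have [M HM] : exists M, forall i, i <= m -> (size (w i)).+1 * k.+2 <= M.
    elim: m => [|m [M HM]].
      by exists ((size (w 0)).+1 * k.+2) => i; rewrite leqn0 => /eqP ->.
    exists (maxn M ((size (w m.+1)).+1 * k.+2)) => i; rewrite leq_eqVlt.
    case/orP => [/eqP ->|Hi]; first by rewrite leq_maxr.
    by rewrite (leq_trans (HM i Hi)) // leq_maxl.
  have [n [Hn' Hb]] := Hu M m.+1.
  by exists n; split => // i Hi; apply: hasblocks_le (HM i Hi) Hb.
have [rho [Hrho HP]] := select Hbd.
exists rho; split => //; apply: big_hered D0 (fun n => HD _) _.
move=> i [//|j] Hij; apply: HP; apply: incr_mono => //.
Qed.

Lemma main (A : finType) (d : nat) : forall D : {set A}, #|D| <= d -> claim D.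
Proof.
elim: d => [|d IHd] D HD; apply: step => D' HD'.
  by move: (leq_trans HD' HD); rewrite ltn0.
by apply: IHd; rewrite -ltnS; exact: leq_trans HD' HD.
Qed.

Theorem lemma3p1 (A : finType) (w : nat -> seq A) :
  exists phi : nat -> nat,
    (forall n, phi n < phi n.+1) /\
    exists (u : seq (seq A)) (Bs : seq {set A}),
      fact_pattern u Bs /\ adequate u Bs (fun n => w (phi n)).
Proof.
have [phi [Hphi HH]] := @main A #|[set: A]| [set: A] (leqnn _) w
  (fun n => introT allP (fun x _ => in_setT x)).
exists phi; split => //.
have [u [Bs [Hf Had]]] := HH (fun n => n) (fun n => ltnSn n).
by exists u, Bs; split.
Qed.
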